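(* Let $n\ge 1$, let $G=P_n$ be the path with vertex set $\{1,\dots,n\}$ and edges $\{i,i+1\}$ for $1\le i<n$, and let $C\subseteq V(G)$ be such that no vertex of $V(G)\setminus C$ is isolated. If $C$ is a good configuration for $G$, then $\gamma_{\rm gr}(G;C)=n$; otherwise $\gamma_{\rm gr}(G;C)=n-1$.
   Context: $N\langle v\rangle = N[v]$ (closed neighborhood) if $v\in C$ and $N\langle v\rangle=N(v)$ (open neighborhood) if $v\notin C$. A sequence $(v_1,\dots,v_k)$ of distinct vertices is legal if $N\langle v_i\rangle\setminus\bigcup_{j<i}N\langle v_j\rangle\neq\emptyset$ for all $i\ge 2$, and dominating if $\bigcup_j N\langle v_j\rangle=V$; $\gamma_{\rm gr}(G;C)$ is the maximum length of a legal dominating sequence. Good configuration (defined for a path with vertices $a_1,\dots,a_n$ in order, applied to $C\cap\{a_1,\dots,a_n\}$; isolated vertices outside $C$ are allowed in this definition): $C$ is a good configuration for the path if (i) $n=1$ and $a_1\in C$; or (ii) $n=2$ and $\{a_1,a_2\}\not\subseteq C$; or (iii) $n\ge 3$ and either $a_1\notin C$ and $C$ is a good configuration for the subpath $(a_3,\dots,a_n)$, or $a_n\notin C$ and $C$ is a good configuration for the subpath $(a_1,\dots,a_{n-2})$. *)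

(* Defs.v *)
From mathcomp Require Import all_boot.
Set Implicit Arguments. Unset Strict Implicit. Unset Printing Implicit Defensive.

Section Grundy.
Variables (T : finType) (adj : rel T) (C : {set T}).

Definition Nopen (v : T) : {set T} := [set u | adj v u].
Definition Nclosed (v : T) : {set T} := v |: Nopen v.

Definition Nang (v : T) : {set T} := if v \in C then Nclosed v else Nopen v.

Definition legal (s : seq T) : bool :=
  uniq s &&
  [forall i : 'I_(size s), (0 < i) ==>
     ~~ (Nang (tnth (in_tuple s) i) \subset \bigcup_(u <- take i s) Nang u)].

Definition dominating (s : seq T) : bool :=
  \bigcup_(u <- s) Nang u == [set: T].

(* gamma_gr(G;C): maximum length of a legal dominating sequence
   (0 if there is none; sequences of distinct vertices have length <= #|T|) *)
Definition gamma_gr : nat :=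
  \max_(k < #|T|.+1 | [exists s : k.-tuple T, legal s && dominating s]) k.

End Grundy.

(* The path P_n on vertices 'I_n = {0,...,n-1} (vertex i stands for i+1). *)
Definition path_adj (n : nat) : rel 'I_n :=
  fun i j => (i.+1 == j :> nat) || (j.+1 == i :> nat).

(* Good configuration for a path given by its vertex sequence a_1 ... a_n *)
Inductive good {T : finType} (C : {set T}) : seq T -> Prop :=
  | good1 a : a \in C -> good C [:: a]
  | good2 a b : ~~ ((a \in C) && (b \in C)) -> good C [:: a; b]
  | goodL a b t : 0 < size t -> a \notin C -> good C t -> good C [:: a, b & t]
  | goodR t a b : 0 < size t -> b \notin C -> good C t -> good C (t ++ [:: a; b]).

(* Main.v *)
Require Import Defs.
From mathcomp Require Import all_boot zify.
Set Implicit Arguments. Unset Strict Implicit. Unset Printing Implicit Defensive.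

Section Nat.
Variable c : nat -> bool.

Definition NN (u x : nat) : bool := (u.+1 == x) || (x.+1 == u) || ((u == x) && c u).

Lemma NNE u x : NN u x -> [\/ x = u.+1, u = x.+1 | (u = x /\ c u)].
Proof.
rewrite /NN => /orP[/orP[/eqP<-|/eqP->]|/andP[/eqP-> H]].
- by apply: Or31.
- by apply: Or32.
- by apply: Or33.
Qed.

Lemma NN_far u x : u.+1 < x \/ x.+1 < u -> ~~ NN u x.
Proof. move=> H; apply/negP => /NNE [] ; lia. Qed.

Lemma NN_succ u : NN u u.+1.
Proof. by rewrite /NN eqxx. Qed.
Lemma NN_pred u : NN u.+1 u.
Proof. by rewrite /NN eqxx orbT. Qed.
Lemma NN_self u : NN u u = c u.
Proof. by rewrite /NN eqxx /= !(gtn_eqF (ltnSn u)) /= ?orbF. Qed.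

Fixpoint fl (lo hi : nat) (prev s : seq nat) : bool :=
  match s with
  | [::] => true
  | x :: s' => has (fun y => NN x y && all (fun u => ~~ NN u y) prev) (iota lo (hi - lo))
               && fl lo hi (rcons prev x) s'
  end.

Lemma fl_cat lo hi prev s1 s2 :
  fl lo hi prev (s1 ++ s2) = fl lo hi prev s1 && fl lo hi (prev ++ s1) s2.
Proof.
elim: s1 prev => [|x s1 IH] prev /=; first by rewrite cats0.
by rewrite IH -cats1 -catA /= andbA.
Qed.

Lemma fl_mono lo hi lo2 hi2 extra prev s :
  lo <= lo2 -> hi2 <= hi ->
  (forall u y, u \in extra -> lo2 <= y < hi2 -> ~~ NN u y) ->
  fl lo2 hi2 prev s -> fl lo hi (extra ++ prev) s.
Proof.
move=> H1 H2 Hx; elim: s prev => [|x s IH] prev //=.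
case/andP => /hasP [y]; rewrite mem_iota => Hy /andP[Nxy Hp] Hf.
rewrite rcons_cat IH // andbT; apply/hasP; exists y.
  rewrite mem_iota; lia.
rewrite Nxy all_cat Hp andbT; apply/allP => u Hu; apply: Hx => //; lia.
Qed.

Definition cov lo hi s := all (fun y => has (fun u => NN u y) s) (iota lo (hi - lo)).

Definition P lo hi s :=
  [&& all (fun x => lo <= x < hi) s, uniq s, size s == hi - lo, fl lo hi [::] s & cov lo hi s].

Lemma P0 lo : P lo lo [::].
Proof. by rewrite /P /cov subnn. Qed.

Lemma P1 lo : c lo -> P lo lo.+1 [:: lo].
Proof.
move=> Hc; rewrite /P /cov /= leqnn ltnSn /= !andbT.
have -> : lo.+1 - lo = 1 by lia.
by rewrite /= NN_self Hc.
Qed.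

Lemma PL lo hi s : lo.+2 <= hi -> ~~ c lo -> P lo.+2 hi s -> P lo hi (lo :: s ++ [:: lo.+1]).
Proof.
move=> Hlh Hc /and5P [Ha Hu Hs Hf Hcov].
have Hsin : forall x, x \in s -> lo.+2 <= x < hi by move=> x /(allP Ha).
apply/and5P; split.
- rewrite /= all_cat /= andbT; repeat (apply/andP; split); try lia.
  by apply/allP => x /Hsin; lia.
- rewrite /= cat_uniq Hu /= andbT mem_cat inE negb_or orbF.
  repeat (apply/andP; split); try lia; apply/negP => /Hsin; lia.
- by rewrite /= size_cat /= (eqP Hs); apply/eqP; lia.
- rewrite /= fl_cat /=; repeat (apply/andP; split) => //.
  + apply/hasP; exists lo.+1; first by rewrite mem_iota; lia.
    by rewrite NN_succ.
  + apply: (fl_mono (lo2:=lo.+2) (hi2:=hi) (extra:=[:: lo]) (prev:=[::])) => //; first lia.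
    move=> u y; rewrite inE => /eqP -> Hy; apply: NN_far; lia.
  + apply/hasP; exists lo; first by rewrite mem_iota; lia.
    rewrite NN_pred /= NN_self Hc /=; apply/allP => u /Hsin Hu'.
    apply: NN_far; lia.
- apply/allP => y; rewrite mem_iota => Hy.
  have [Hy0|Hy0] := ltnP y lo.+2.
    have [->|Hne] := eqVneq y lo.
      by apply/hasP; exists lo.+1; [rewrite inE mem_cat inE eqxx !orbT | exact: NN_pred].
    have -> : y = lo.+1 by lia.
    by apply/hasP; exists lo; [rewrite inE eqxx | exact: NN_succ].
  have /(allP Hcov) /hasP [u Hu1 Hu2] : y \in iota lo.+2 (hi - lo.+2) by rewrite mem_iota; lia.
  by apply/hasP; exists u => //; rewrite inE mem_cat Hu1 orbT.
Qed.

Lemma PR lo m s : lo <= m -> ~~ c m.+1 -> P lo m s -> P lo m.+2 (m.+1 :: s ++ [:: m]).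
Proof.
move=> Hlh Hc /and5P [Ha Hu Hs Hf Hcov].
have Hsin : forall x, x \in s -> lo <= x < m by move=> x /(allP Ha).
apply/and5P; split.
- rewrite /= all_cat /= andbT; repeat (apply/andP; split); try lia.
  by apply/allP => x /Hsin; lia.
- rewrite /= cat_uniq Hu /= andbT mem_cat inE negb_or orbF.
  repeat (apply/andP; split); try lia; apply/negP => /Hsin; lia.
- by rewrite /= size_cat /= (eqP Hs); apply/eqP; lia.
- rewrite /= fl_cat /=; repeat (apply/andP; split) => //.
  + apply/hasP; exists m; first by rewrite mem_iota; lia.
    by rewrite NN_pred.
  + apply: (fl_mono (lo2:=lo) (hi2:=m) (extra:=[:: m.+1]) (prev:=[::])) => //; first lia.
    move=> u y; rewrite inE => /eqP -> Hy; apply: NN_far; lia.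
  + apply/hasP; exists m.+1; first by rewrite mem_iota; lia.
    rewrite NN_succ /= NN_self (negbTE Hc) /=; apply/allP => u /Hsin Hu'.
    apply: NN_far; lia.
- apply/allP => y; rewrite mem_iota => Hy.
  have [Hy0|Hy0] := ltnP y m.
    have /(allP Hcov) /hasP [u Hu1 Hu2] : y \in iota lo (m - lo) by rewrite mem_iota; lia.
    by apply/hasP; exists u => //; rewrite inE mem_cat Hu1 orbT.
  have [->|Hne] := eqVneq y m.+1.
    by apply/hasP; exists m; [rewrite inE mem_cat inE eqxx !orbT | exact: NN_succ].
  have -> : y = m by lia.
  by apply/hasP; exists m.+1; [rewrite inE eqxx | exact: NN_pred].
Qed.

Inductive goodn : seq nat -> Prop :=
  | goodn1 a : c a -> goodn [:: a]
  | goodn2 a b : ~~ (c a && c b) -> goodn [:: a; b]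
  | goodnL a b t : 0 < size t -> ~~ c a -> goodn t -> goodn [:: a, b & t]
  | goodnR t a b : 0 < size t -> ~~ c b -> goodn t -> goodn (t ++ [:: a; b]).

Lemma goodn_P l : goodn l -> forall lo, l = iota lo (size l) -> exists s, P lo (lo + size l) s.
Proof.
elim=> {l} [a Ha|a b Hab|a b t Ht Ha Hg IH|t a b Ht Hb Hg IH] lo /=.
- case=> Ea; subst a; exists [:: lo]; rewrite addn1; exact: P1.
- case=> Ea Eb; subst a b; rewrite addn2.
  case/nandP: Hab => H.
    exists (lo :: [::] ++ [:: lo.+1]); apply: PL => //; exact: P0.
  exists (lo.+1 :: [::] ++ [:: lo]); apply: PR => //; exact: P0.
- case=> Ea Eb Et; subst a b; have [s Hs] := IH lo.+2 Et.
  exists (lo :: s ++ [:: lo.+1]); have -> : lo + (size t).+2 = lo.+2 + size t by lia.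
  apply: PL => //; lia.
- rewrite size_cat /= addn2 => E.
  have E2 := E; rewrite -addn2 iotaD in E2.
  have [E3 E4] : t = iota lo (size t) /\ [:: a; b] = iota (lo + size t) 2.
    have := eqxx (t ++ [:: a; b]); rewrite {2}E2 eqseq_cat ?size_iota //.
    by case/andP => /eqP H1 /eqP H2; split.
  have [s Hs] := IH lo E3.
  case: E4 => Ea Eb.
  exists ((lo + size t).+1 :: s ++ [:: lo + size t]); have -> : lo + (size t).+2 = (lo + size t).+2 by lia.
  apply: PR => //; [lia | by rewrite -Eb].
Qed.

End Nat.

Section B.
Variables (c : nat -> bool) (n : nat) (l : seq nat).
Hypotheses (Hu : uniq l) (Hs : size l = n) (Ha : all (fun x => x < n) l)
  (Hok : forall i, i < n -> has (fun y => NN c (nth 0 l i) y && all (fun u => ~~ NN c u y) (take i l)) (iota 0 n)).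

Let t v := index v l.
Definition newB v x := all (fun u => ~~ NN c u x) (take (t v) l).
Definition fB v := if (v.+1 < n) && newB v v.+1 then v.+1
                   else if c v && newB v v then v else v.-1.

Lemma memB v : v < n -> v \in l.
Proof.
move=> Hv.
have Hsub : {subset l <= iota 0 n} by move=> x Hx; rewrite mem_iota /= add0n (allP Ha x Hx).
have Hsz : size (iota 0 n) <= size l by rewrite size_iota Hs.
have [_ E] := uniq_min_size Hu Hsub Hsz.
by rewrite E mem_iota.
Qed.

Lemma tB_lt v : v < n -> t v < n.
Proof. by move=> /memB Hv; rewrite -Hs index_mem. Qed.

Lemma nth_tB v : v < n -> nth 0 l (t v) = v.
Proof. by move=> /memB Hv; rewrite nth_index. Qed.

Lemma fB_spec v : v < n -> [/\ fB v < n, NN c v (fB v) & newB v (fB v)].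
Proof.
move=> Hv; have /hasP [y] := Hok (tB_lt Hv); rewrite mem_iota /= add0n nth_tB // => Hy /andP [Nvy Hnew].
rewrite /fB.
case: ifP => [/andP [H1 H2]|H1]; first by split => //; exact: NN_succ.
case: ifP => [/andP [H3 H4]|H3]; first by split => //; rewrite NN_self.
case/NNE: Nvy => [Ey|Ey|[Ey Hc]]; subst.
- by move: H1; rewrite /newB Hy Hnew.
- by split => //; try lia; exact: NN_pred.
- by move: H3; rewrite /newB Hc Hnew.
Qed.

Lemma fB_lt v : v < n -> fB v < n. Proof. by case/fB_spec. Qed.
Lemma fB_NN v : v < n -> NN c v (fB v). Proof. by case/fB_spec. Qed.
Lemma fB_new v : v < n -> newB v (fB v). Proof. by case/fB_spec. Qed.

Lemma before u v x : u < n -> v < n -> t u < t v -> newB v x -> ~~ NN c u x.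
Proof.
move=> Hu' Hv Htl /allP; apply; rewrite in_take //; exact: memB.
Qed.

Lemma fB_inj u v : u < n -> v < n -> fB u = fB v -> u = v.
Proof.
move=> Hu' Hv E.
case: (ltngtP (t u) (t v)) => Htl.
- by have := before Hu' Hv Htl (fB_new Hv); rewrite -E fB_NN.
- by have := before Hv Hu' Htl (fB_new Hu'); rewrite E fB_NN.
- by apply: (index_inj 0 (memB Hu') (memB Hv)).
Qed.

Lemma fB_surj x : x < n -> exists2 w, w < n & fB w = x.
Proof.
move=> Hx.
have Hun : uniq (map fB (iota 0 n)).
  rewrite map_inj_in_uniq ?iota_uniq // => u v; rewrite !mem_iota /= !add0n; exact: fB_inj.
have Hsub : {subset map fB (iota 0 n) <= iota 0 n}.
  by move=> y /mapP [w]; rewrite mem_iota /= add0n => Hw ->; rewrite mem_iota /= add0n; exact: fB_lt.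
have Hsz : size (iota 0 n) <= size (map fB (iota 0 n)) by rewrite size_map.
have [_ E] := uniq_min_size Hun Hsub Hsz.
have : x \in map fB (iota 0 n) by rewrite E mem_iota.
by case/mapP => w; rewrite mem_iota /= add0n => Hw ->; exists w.
Qed.

Lemma TB v x w : v < n -> x < n -> w < n -> NN c v x -> x != fB v -> fB w = x -> t w < t v.
Proof.
move=> Hv Hx Hw Nvx Hne Ew.
case: (ltngtP (t w) (t v)) => // Htl.
- by have := before Hv Hw Htl (fB_new Hw); rewrite Ew Nvx.
- by move: Hne; rewrite (index_inj 0 (memB Hv) (memB Hw) (esym Htl)) Ew eqxx.
Qed.

Lemma fB_cases v : v < n -> [\/ fB v = v.+1, (fB v = v /\ c v) | (0 < v /\ fB v = v.-1)].
Proof.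
move=> /fB_NN /NNE [E|E|[E Hc]].
- by apply: Or31.
- by apply: Or33; split; lia.
- by apply: Or32.
Qed.

Lemma swapB v : v.+1 < n -> (fB v = v.+1 -> fB v.+1 = v) /\ (fB v.+1 = v -> fB v = v.+1).
Proof.
elim: v => [|k IH] Hv.
- split.
  + move=> E; have [w Hw Ew] := fB_surj (x:=0) (ltn_trans (ltn0Sn _) Hv).
    case: (fB_cases Hw) => [E'|[E' _]|[Hw0 E']]; first lia.
    * have Ew0 : w = 0 by lia.
      by subst w; move: E; rewrite Ew.
    * have Ew0 : w = 1 by lia.
      by subst w.
  + move=> E; case: (fB_cases (ltnW Hv)) => [E'|[E' _]|[Hw0 E']] //; try lia.
    by have := fB_inj (ltnW Hv) Hv (etrans E' (esym E)).
- have Hk : k.+1 < n by lia.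
  have [IH1 IH2] := IH Hk.
  split.
  + move=> E; have [w Hw Ew] := fB_surj (x:=k.+1) (ltnW Hv).
    case: (fB_cases Hw) => [E'|[E' _]|[Hw0 E']].
    * have Ewk : w = k by lia.
      subst w; have := IH1 Ew; rewrite E; lia.
    * have Ewk : w = k.+1 by lia.
      by subst w; move: E; rewrite Ew; lia.
    * have Ewk : w = k.+2 by lia.
      by subst w.
  + move=> E; case: (fB_cases (ltnW Hv)) => [E'|[E' _]|[Hw0 E']] //.
    * by have := fB_inj (ltnW Hv) Hv (etrans E' (esym E)); lia.
    * have E2 : fB k.+1 = k by rewrite E'.
      have := IH2 E2 => E3.
      have := fB_inj (ltnW Hk) Hv (etrans E3 (esym E)); lia.
Qed.


Definition BW x := fB x = x \/ (0 < x /\ fB x = x.-1 /\ t x < t x.-1).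

Lemma BW_pre x : x < n -> BW x -> exists2 w, w < n & (fB w = x /\ (w = x \/ (w = x.-1 /\ t x < t w))).
Proof.
move=> Hx [E|[Hx0 [E Ht]]]; first by exists x => //; split => //; left.
have Hx1 : x.-1.+1 < n by lia.
have [_ H2] := swapB Hx1.
have E' : fB x.-1.+1 = x.-1 by rewrite prednK.
have := H2 E'; rewrite prednK // => E2.
by exists x.-1; [lia | split => //; right].
Qed.

Lemma stepB x : x.+1 < n -> BW x -> fB x.+1 = x.+2 /\ t x.+2 < t x.+1.
Proof.
move=> Hx HB.
have Hx' : x < n by lia.
have Hfx : x.+1 != fB x by case: HB => [->|[_ [-> _]]]; lia.
have [w Hw [Ew Hwx]] := BW_pre Hx' HB.
case: (fB_cases Hx) => [E|[E Hc]|[_ E]].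
- split => //.
  have Hx2 : x.+2 < n by rewrite -E; exact: fB_lt.
  have [H1 _] := swapB Hx2; have E2 := H1 E.
  have T1 := TB Hx' Hx Hx2 (NN_succ c x) Hfx E2.
  have Hne : x != fB x.+1 by rewrite E; lia.
  have T2 := TB Hx Hx' Hw (NN_pred c x) Hne Ew.
  case: Hwx => [Ewx|[Ewx Ht]]; subst w; lia.
- have T1 := TB Hx' Hx Hx (NN_succ c x) Hfx E.
  have Hne : x != fB x.+1 by rewrite E; lia.
  have T2 := TB Hx Hx' Hw (NN_pred c x) Hne Ew.
  case: Hwx => [Ewx|[Ewx Ht]]; subst w; lia.
- have := fB_inj Hw Hx (etrans Ew (esym E)); case: Hwx; lia.
Qed.

Lemma bw_nc y : 0 < y -> y < n -> fB y = y.-1 -> t y < t y.-1 -> ~~ c y.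
Proof.
move=> Hy0 Hy E Ht; apply/negP => Hc.
have Hy1 : y.-1.+1 < n by lia.
have [_ H2] := swapB Hy1.
have E' : fB y.-1.+1 = y.-1 by rewrite prednK.
have := H2 E'; rewrite prednK // => E2.
have Hne : y != fB y by rewrite E; lia.
have Hy2 : y.-1 < n by lia.
have HN : NN c y y by rewrite NN_self.
have := TB Hy Hy Hy2 HN Hne E2.
lia.
Qed.

Lemma reachB k : forall x, BW x -> x + k < n -> fB (x + k) != (x + k).+1 ->
  k = 0 \/ (fB (x + k) = (x + k).-1 /\ t (x + k) < t (x + k).-1).
Proof.
elim: k {-2}k (leqnn k) => [|K IH] k Hk x HB Hxk Hcl.
- by left; lia.
- case: k Hk Hxk Hcl => [|[|k]] Hk Hxk Hcl; first by left.
  + have Hx1 : x.+1 < n by lia.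
    have [E _] := stepB Hx1 HB.
    by move: Hcl; rewrite addn1 E eqxx.
  + right.
    have Hx1 : x.+1 < n by lia.
    have [E Ht] := stepB Hx1 HB.
    have Hx2 : x.+2 < n by lia.
    have [H1 _] := swapB Hx2; have E2 := H1 E.
    have HB2 : BW x.+2 by right; split => //.
    have HkK : k <= K by lia.
    have IH' := IH k HkK x.+2 HB2.
    have Ex : x + k.+2 = x.+2 + k by lia.
    rewrite Ex in Hxk Hcl *.
    case: (IH' Hxk Hcl) => [->|//].
    by rewrite addn0 E2.
Qed.

Lemma intervalB k : forall lo, 0 < k -> lo + k <= n -> (lo == 0) || (fB lo != lo.-1) ->
  fB (lo + k).-1 != lo + k -> goodn c (iota lo k).
Proof.
elim: k {-2}k (leqnn k) => [|K IH] k Hk lo Hk0 Hn Hl Hr; first lia.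
have rpeel : 3 <= k -> fB (lo + k).-1 = (lo + k).-2 -> t (lo + k).-1 < t (lo + k).-2 ->
    goodn c (iota lo k).
  move=> Hk3 E Ht.
  have -> : iota lo k = iota lo (k - 2) ++ [:: (lo + k).-2; (lo + k).-1].
    have {1}-> : k = (k - 2) + 2 by lia.
    rewrite iotaD /=; congr (_ ++ [:: _; _]); lia.
  apply: goodnR; first by rewrite size_iota; lia.
  - have Hy0 : 0 < (lo + k).-1 by lia.
    have Hy : (lo + k).-1 < n by lia.
    have E' : fB (lo + k).-1 = (lo + k).-1.-1 by rewrite E.
    have Ht' : t (lo + k).-1 < t (lo + k).-1.-1 by [].
    exact: bw_nc Hy0 Hy E' Ht'.
  - apply: IH; try lia.
    have Ha1 : (lo + (k - 2)).-1 < n by lia.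
    have Ha2 : (lo + k).-1 < n by lia.
    apply/negP => /eqP E2.
    have Ee : lo + (k - 2) = (lo + k).-2 by lia.
    have E2' : fB (lo + (k - 2)).-1 = fB (lo + k).-1 by rewrite E2 E Ee.
    have := fB_inj Ha1 Ha2 E2'; lia.
have Hlo : lo < n by lia.
case: (fB_cases Hlo) => [E|[E Hc]|[Hlo0 E]].
- have Hk1 : 1 < k.
    case: (ltnP 1 k) => // H1k; have Ek : k = 1 by lia.
    by move: Hr; rewrite Ek addn1 /= E eqxx.
  have Hlo1 : lo.+1 < n by lia.
  have [H1 _] := swapB Hlo1; have E1 := H1 E.
  case Hc: (c lo).
  + have HN : NN c lo lo by rewrite NN_self.
    have Hne : lo != fB lo by rewrite E; lia.
    have Ht := TB Hlo Hlo Hlo1 HN Hne E1.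
    have HB : BW lo.+1 by right; split => //.
    have Hnc : ~~ c lo.+1.
      apply: bw_nc => //; lia.
    case: k Hk Hk0 Hn Hr Hk1 rpeel => [|[|[|k]]] // Hk Hk0 Hn Hr Hk1 rpeel.
    * by apply: goodn2; rewrite Hc.
    * have Hx : lo.+1 + k.+1 < n by lia.
      have Hcl : fB (lo.+1 + k.+1) != (lo.+1 + k.+1).+1.
        have Ex : lo.+1 + k.+1 = (lo + k.+3).-1 by lia.
        have Ey : (lo + k.+3).-1.+1 = lo + k.+3 by lia.
        by rewrite Ex Ey.
      case: (reachB HB Hx Hcl) => // -[E3 Ht3].
      have Ex : (lo + k.+3).-2 = (lo.+1 + k.+1).-1 by lia.
      have Ey : (lo + k.+3).-1 = lo.+1 + k.+1 by lia.
      by apply: rpeel; rewrite ?Ex ?Ey.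
  + case: k Hk Hk0 Hn Hr Hk1 rpeel => [|[|[|k]]] // Hk Hk0 Hn Hr Hk1 rpeel.
    * by apply: goodn2; rewrite Hc.
    * have -> : iota lo k.+3 = [:: lo, lo.+1 & iota lo.+2 k.+1] by [].
      apply: goodnL; [by rewrite size_iota | by rewrite Hc | ].
      apply: IH; try lia.
      - apply/orP; right; apply/negP => /eqP E2.
        have Hlo2 : lo.+2 < n by lia.
        have := fB_inj Hlo2 Hlo (etrans E2 (esym E)); lia.
      - by have -> : lo.+2 + k.+1 = lo + k.+3 by lia.
- case: k Hk Hk0 Hn Hr rpeel => [|[|k]] // Hk Hk0 Hn Hr rpeel.
  + by apply: goodn1.
  + have HB : BW lo by left.
    have Hx : lo + k.+1 < n by lia.
    have Hcl : fB (lo + k.+1) != (lo + k.+1).+1.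
      have Ex : (lo + k.+2).-1 = lo + k.+1 by lia.
      have Ey : lo + k.+2 = (lo + k.+1).+1 by lia.
      by move: Hr; rewrite Ex Ey.
    case: (reachB HB Hx Hcl) => // -[E3 Ht3].
    case: k Hk Hk0 Hn Hr rpeel Hx Hcl E3 Ht3 => [|k] Hk Hk0 Hn Hr rpeel Hx Hcl E3 Ht3.
      have Hlo1 : lo.+1 < n by lia.
      move: E3; rewrite addn1 /= => E3.
      have := fB_inj Hlo1 Hlo (etrans E3 (esym E)); lia.
    have Ex : (lo + k.+3).-2 = (lo + k.+2).-1 by lia.
    have Ey : (lo + k.+3).-1 = lo + k.+2 by lia.
    by apply: rpeel; rewrite ?Ex ?Ey.
- by move: Hl; rewrite E eqxx orbF; lia.
Qed.

Lemma goodB : 0 < n -> goodn c (iota 0 n).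
Proof.
move=> Hn; apply: intervalB => //.
have Hn1 : n.-1 < n by lia.
have := fB_lt Hn1; rewrite add0n; lia.
Qed.

End B.

Section Bridge.
Variables (n : nat) (C : {set 'I_n}).

Definition cC (i : nat) : bool := [exists x : 'I_n, (val x == i) && (x \in C)].

Lemma cC_val (v : 'I_n) : cC (val v) = (v \in C).
Proof.
apply/existsP/idP => [[x /andP [/eqP E Hx]]|Hv].
  by have -> : v = x by apply: val_inj.
by exists v; rewrite eqxx.
Qed.

Notation adj := (@path_adj n).

Lemma Nang_NN (v x : 'I_n) : (x \in Nang adj C v) = NN cC v x.
Proof.
rewrite /Nang /Nclosed /Nopen /NN /path_adj cC_val.
case: (v \in C); rewrite ?inE ?andbT ?andbF ?orbF //.
rewrite -(inj_eq val_inj) /= [val x == val v]eq_sym.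
by case: (val v == val x); rewrite ?orbT ?orbF.
Qed.

Lemma mem_bigcup_seq (r : seq 'I_n) (F : 'I_n -> {set 'I_n}) x :
  (x \in \bigcup_(u <- r) F u) = has (fun u => x \in F u) r.
Proof.
elim: r => [|u r IH]; first by rewrite big_nil inE.
by rewrite big_cons inE IH.
Qed.

Lemma step_iff (s : seq 'I_n) i (Hi : i < size s) (x0 : 'I_n) :
  ~~ (Nang adj C (nth x0 s i) \subset \bigcup_(u <- take i s) Nang adj C u) =
  has (fun y => NN cC (nth 0 (map val s) i) y && all (fun u => ~~ NN cC u y) (take i (map val s))) (iota 0 n).
Proof.
rewrite (nth_map x0) //.
apply/subsetPn/hasP => [[x Hx Hnx]|[y Hy /andP [H1 H2]]].
- exists (val x); first by rewrite mem_iota /= add0n ltn_ord.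
  rewrite -Nang_NN Hx /=; move: Hnx; rewrite mem_bigcup_seq -map_take.
  move=> Hh; apply/allP => u /mapP [w Hw ->]; rewrite -Nang_NN.
  by apply/negP => Hw'; move/negP: Hh; apply; apply/hasP; exists w.
- have Hyn : y < n by move: Hy; rewrite mem_iota.
  exists (Ordinal Hyn); first by rewrite Nang_NN.
  rewrite mem_bigcup_seq; apply/hasP => -[w Hw]; rewrite Nang_NN /=.
  apply/negP; move: H2; rewrite -map_take => /allP; apply.
  by apply/mapP; exists w.
Qed.

Lemma fl_take lo hi prev (s : seq nat) : fl cC lo hi prev s ->
  forall i, i < size s -> has (fun y => NN cC (nth 0 s i) y && all (fun u => ~~ NN cC u y) (prev ++ take i s)) (iota lo (hi - lo)).
Proof.
elim: s prev => [|x s IH] prev //= /andP [H1 H2] [|i] Hi /=.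
  by rewrite ?take0 cats0.
by rewrite -cat_rcons; apply: IH.
Qed.

Lemma legal_of_fl (s : seq 'I_n) : uniq s -> fl cC 0 n [::] (map val s) -> legal adj C s.
Proof.
move=> Hu Hf; rewrite /legal Hu /=; apply/forallP => i; apply/implyP => _.
rewrite (tnth_nth (tnth (in_tuple s) i)) step_iff //.
have := fl_take Hf (i:=i); rewrite size_map subn0 /= => H; exact: H.
Qed.

Lemma fl_of_legal (s : seq 'I_n) : legal adj C s ->
  forall i, 0 < i < size s -> has (fun y => NN cC (nth 0 (map val s) i) y && all (fun u => ~~ NN cC u y) (take i (map val s))) (iota 0 n).
Proof.
case/andP => _ /forallP H i /andP [Hi0 Hi].
have := H (Ordinal Hi); rewrite Hi0 /= (tnth_nth (tnth (in_tuple s) (Ordinal Hi))) /= step_iff //.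
Qed.

Lemma dom_of_cov (s : seq 'I_n) : cov cC 0 n (map val s) -> dominating adj C s.
Proof.
move=> /allP Hc; rewrite /dominating; apply/eqP/setP => x; rewrite inE mem_bigcup_seq.
have /Hc /hasP [y /mapP [u Hu ->] Hy] : val x \in iota 0 (n - 0) by rewrite subn0 mem_iota /= add0n ltn_ord.
by apply/hasP; exists u => //; rewrite Nang_NN.
Qed.

Lemma cov_of_dom (s : seq 'I_n) : dominating adj C s -> forall x : 'I_n, has (fun u : 'I_n => NN cC u x) s.
Proof.
move=> /eqP /setP H x; have := H x; rewrite inE mem_bigcup_seq => /hasP [u Hu Hx].
by apply/hasP; exists u => //; rewrite -Nang_NN.
Qed.

End Bridge.

Section Final.
Variables (n : nat) (C : {set 'I_n}).
Notation adj := (@path_adj n).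
Notation c := (cC C).

Lemma good_goodn (s : seq 'I_n) : good C s -> goodn c (map val s).
Proof.
elim=> {s} [a Ha|a b Hab|a b t Ht Ha Hg IH|t a b Ht Hb Hg IH] /=.
- by apply: goodn1; rewrite cC_val.
- by apply: goodn2; rewrite !cC_val.
- by apply: goodnL; rewrite ?size_map ?cC_val.
- by rewrite map_cat; apply: goodnR; rewrite ?size_map ?cC_val.
Qed.

Lemma goodn_good l : goodn c l -> forall s : seq 'I_n, map val s = l -> good C s.
Proof.
elim=> {l} [a Ha|a b Hab|a b t Ht Ha Hg IH|t a b Ht Hb Hg IH] s.
- case: s => [|x [|]] //= [Ex]; subst a; apply: good1; by rewrite -cC_val.
- case: s => [|x [|y [|]]] //= [Ex Ey]; subst a b; apply: good2; by rewrite -!cC_val.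
- case: s => [|x [|y s]] //= [Ex Ey Es]; subst a b; apply: goodL.
  + by rewrite -Es size_map in Ht.
  + by rewrite -cC_val.
  + exact: IH.
- move=> E.
  have Hsz : size (map val s) = size t + 2 by rewrite E size_cat.
  rewrite -(cat_take_drop (size t) s).
  have E1 : map val (take (size t) s) = t by rewrite map_take E take_size_cat.
  have E2 : map val (drop (size t) s) = [:: a; b] by rewrite map_drop E drop_size_cat.
  move: E2; case: (drop (size t) s) => [|x [|y [|]]] //= [Ex Ey]; subst a b.
  apply: goodR.
  + by rewrite -E1 size_map in Ht.
  + by rewrite -cC_val.
  + exact: IH.
Qed.

Lemma lift_seq (l : seq nat) : all (fun x => x < n) l -> exists s : seq 'I_n, map val s = l.
Proof.
elim: l => [|x l IH] /=; first by exists [::].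
case/andP => Hx /IH [s Hs]; exists (Ordinal Hx :: s); by rewrite /= Hs.
Qed.

Lemma gamma_ge (s : seq 'I_n) : legal adj C s -> dominating adj C s -> size s <= gamma_gr adj C.
Proof.
move=> Hl Hd.
have Hsz : size s < #|'I_n|.+1.
  have : size (map val s) <= size (iota 0 n).
    apply: uniq_leq_size; first by rewrite map_inj_uniq; [case/andP: Hl | exact: val_inj].
    by move=> y /mapP [u _ ->]; rewrite mem_iota /= add0n ltn_ord.
  by rewrite card_ord size_map size_iota ltnS.
rewrite /gamma_gr.
have := @leq_bigmax_cond _ (fun k : 'I_(#|'I_n|.+1) => [exists s0 : k.-tuple 'I_n, legal adj C s0 && dominating adj C s0]) (fun k => val k) (Ordinal Hsz).
apply; apply/existsP.
have Hs : size s == size s by [].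
by exists (Tuple Hs) => /=; rewrite Hl Hd.
Qed.

Lemma gamma_le_n : gamma_gr adj C <= n.
Proof.
rewrite /gamma_gr; apply/bigmax_leqP => i _.
by move: (ltn_ord i); rewrite ltnS => /leq_trans; apply; rewrite card_ord.
Qed.

Lemma gamma_le_pred : (forall s : seq 'I_n, size s = n -> legal adj C s -> dominating adj C s -> False) ->
  gamma_gr adj C <= n.-1.
Proof.
move=> H; rewrite /gamma_gr; apply/bigmax_leqP => i /existsP [t /andP [Hl Hd]].
have Hi : i <= n by move: (ltn_ord i); rewrite ltnS => /leq_trans; apply; rewrite card_ord.
case: (ltnP i n) => Hin; first lia.
exfalso; apply: (H t) => //; rewrite size_tuple; lia.
Qed.

Lemma fl_iota a b : a + b < n -> fl c 0 n (iota 0 a) (iota a b).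
Proof.
elim: b a => [|b IH] a Hab //=.
apply/andP; split.
- apply/hasP; exists a.+1; first by rewrite mem_iota /= add0n subn0; lia.
  rewrite NN_succ /=; apply/allP => u; rewrite mem_iota /= add0n => Hu.
  apply: NN_far; lia.
- have -> : rcons (iota 0 a) a = iota 0 a.+1 by rewrite -cats1 -addn1 iotaD.
  apply: IH; lia.
Qed.

End Final.

Theorem corollary2 (n : nat) (hn : 0 < n) (C : {set 'I_n})
  (hC : forall v : 'I_n, v \notin C -> exists u : 'I_n, path_adj v u) :
  (good C (enum 'I_n) -> gamma_gr (@path_adj n) C = n) /\
  (~ good C (enum 'I_n) -> gamma_gr (@path_adj n) C = n.-1).
Proof.
have Eenum : map val (enum 'I_n) = iota 0 n := val_enum_ord n.
split.
- move=> Hg; have Hgn := good_goodn Hg; rewrite Eenum in Hgn.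
  have Ei : iota 0 n = iota 0 (size (iota 0 n)) by rewrite size_iota.
  have [sn Hsn] := goodn_P Hgn Ei.
  rewrite size_iota add0n in Hsn.
  case/and5P: Hsn => Ha Hu Hsz Hf Hcov.
  have Ha' : all (fun x => x < n) sn by apply/allP => x /(allP Ha) /andP [].
  have [s Es] := lift_seq Ha'; subst sn.
  have Hus : uniq s by rewrite -(map_inj_uniq val_inj).
  have Hl := legal_of_fl Hus Hf.
  have Hd := dom_of_cov Hcov.
  have := gamma_ge Hl Hd; rewrite -(size_map val) (eqP Hsz) subn0 => H.
  by apply/eqP; rewrite eqn_leq gamma_le_n H.
- move=> Hng.
  have Hn2 : 1 < n.
    case: (ltnP 1 n) => // Hn1; exfalso; apply: Hng.
    apply: (goodn_good (l := iota 0 n)) => //.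
    have -> : iota 0 n = [:: 0] by have -> : n = 1 by lia.
    apply: goodn1.
    have <- : val (Ordinal hn) = 0 by [].
    rewrite cC_val; apply/negPn/negP => /hC [u]; rewrite /path_adj /=.
    by have := ltn_ord u; lia.
  apply/eqP; rewrite eqn_leq; apply/andP; split.
  + apply: gamma_le_pred => s Hs Hl Hd; apply: Hng.
    apply: (goodn_good (l := iota 0 n)) => //.
    apply: (goodB (l := map val s)).
    * by rewrite map_inj_uniq; [case/andP: Hl | exact: val_inj].
    * by rewrite size_map.
    * by apply/allP => x /mapP [u _ ->]; exact: ltn_ord.
    * move=> i Hi; case: i Hi => [|i] Hi.
        have Hv : nth 0 (map val s) 0 < n.
          by rewrite (nth_map (Ordinal hn)) ?Hs // ltn_ord.
        set v := nth 0 (map val s) 0 in Hv *.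
        case: (ltnP v.+1 n) => Hv1.
          by apply/hasP; exists v.+1; [rewrite mem_iota; lia | rewrite take0 /= andbT NN_succ].
        apply/hasP; exists v.-1; first by rewrite mem_iota; lia.
        rewrite take0 /= andbT; have -> : v = v.-1.+1 by lia.
        by rewrite NN_pred.
      by apply: fl_of_legal => //; rewrite Hs.
    * exact: hn.
  + have Ha : all (fun x => x < n) (iota 0 n.-1).
      by apply/allP => x; rewrite mem_iota; lia.
    have [s1 Es] := lift_seq Ha.
    have Hus : uniq s1 by rewrite -(map_inj_uniq val_inj) Es iota_uniq.
    have Hf : fl (cC C) 0 n [::] (map val s1) by rewrite Es; apply: (@fl_iota n C 0 n.-1); lia.
    have Hl := legal_of_fl Hus Hf.
    have Hcov : cov (cC C) 0 n (map val s1).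
      rewrite Es; apply/allP => y; rewrite mem_iota subn0 /= add0n => Hy.
      case: y Hy => [|y] Hy.
        case: (ltnP 2 n) => Hn3.
          by apply/hasP; exists 1; [rewrite mem_iota; lia | exact: NN_pred].
        have En : n = 2 by lia.
        case Hc0: (cC C 0).
          by apply/hasP; exists 0; [rewrite mem_iota; lia | rewrite NN_self].
        exfalso; apply: Hng; apply: (goodn_good (l := iota 0 n)) => //.
        have -> : iota 0 n = [:: 0; 1] by rewrite En.
        apply: goodn2; by rewrite Hc0.
      by apply/hasP; exists y; [rewrite mem_iota; lia | exact: NN_succ].
    have Hd := dom_of_cov Hcov.
    have := gamma_ge Hl Hd; rewrite -(size_map val) Es size_iota; exact.
Qed.
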